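(* Let $k$ be a field of characteristic $0$ and let $\mathcal L$ be a Lie torus of type $(\Delta,\Lambda)$ over $k$. Suppose $\alpha,\beta\in\Delta^\times$ satisfy $\langle\beta,\alpha^\vee\rangle<0$, and let $0\neq x_\alpha\in\mathcal L_\alpha$ and $0\neq y_\beta\in\mathcal L_\beta$. Then $\mathrm{ad}(x_\alpha)^{-\langle\beta,\alpha^\vee\rangle}\,y_\beta\neq 0$.
   Context: An irreducible finite root system in a finite-dimensional $k$-vector space $\mathcal X$ is a finite subset $\Delta\subset\mathcal X$ with $0\in\Delta$ such that $\Delta^\times:=\Delta\setminus\{0\}$ is an irreducible (possibly non-reduced) finite root system in $\mathcal X$ in the usual sense. Write $Q=\mathrm{span}_{\mathbb Z}(\Delta)$, $\alpha^\vee$ for the coroot of $\alpha\in\Delta^\times$, $\langle\beta,\alpha^\vee\rangle$ for the natural pairing, and $\Delta^\times_{\mathrm{ind}}=\Delta^\times\setminus 2\Delta^\times$. Let $\Lambda$ be a finitely generated free abelian group. A Lie torus of type $(\Delta,\Lambda)$ is a Lie algebra $\mathcal L$ over $k$ with a $Q\times\Lambda$-grading $\mathcal L=\bigoplus_{(\alpha,\lambda)\in Q\times\Lambda}\mathcal L_\alpha^\lambda$ (with $\mathcal L_\alpha:=\bigoplus_\lambda\mathcal L_\alpha^\lambda$ and $\mathcal L^\lambda:=\bigoplus_\alpha\mathcal L_\alpha^\lambda$) such that: (LT1) $\{\alpha\in Q:\mathcal L_\alpha\neq0\}=\Delta$; (LT2)(i) $\mathcal L_\alpha^0\neq 0$ for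 all $\alpha\in\Delta^\times_{\mathrm{ind}}$; (ii) whenever $\alpha\in\Delta^\times$, $\lambda\in\Lambda$ and $\mathcal L_\alpha^\lambda\neq0$, there exist $e\in\mathcal L_\alpha^\lambda$, $f\in\mathcal L_{-\alpha}^{-\lambda}$ with $\mathcal L_\alpha^\lambda=ke$, $\mathcal L_{-\alpha}^{-\lambda}=kf$ and $[[e,f],x]=\langle\beta,\alpha^\vee\rangle x$ for all $x\in\mathcal L_\beta$, $\beta\in Q$; (LT3) $\mathcal L$ is generated as an algebra by the spaces $\mathcal L_\alpha$, $\alpha\in\Delta^\times$; (LT4) $\Lambda$ is generated as a group by $\{\lambda\in\Lambda:\mathcal L^\lambda\neq0\}$. *)

(* Defs.v *)
From HB Require Import structures.
From mathcomp Require Import all_boot all_order all_algebra.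
Set Implicit Arguments. Unset Strict Implicit. Unset Printing Implicit Defensive.
Import GRing.Theory.
Local Open Scope ring_scope.

Definition is_lie_bracket (k : fieldType) (L : lmodType k) (br : L -> L -> L) :=
  [/\ (forall (c : k) (x y z : L), br (c *: x + y) z = c *: br x z + br y z),
      (forall (c : k) (x y z : L), br z (c *: x + y) = c *: br z x + br z y),
      (forall x : L, br x x = 0) &
      (forall x y z : L, br x (br y z) + br y (br z x) + br z (br x y) = 0)].

Definition nzroots (k : fieldType) (X : vectType k) (D : seq X) : seq X :=
  [seq a <- D | a != 0].

Definition indroots (k : fieldType) (X : vectType k) (D : seq X) : seq X :=
  [seq a <- nzroots D | a \notin map (fun b => 2%:R *: b) (nzroots D)].

(* D (containing 0) is an irreducible finite root system in X, with coroot      *)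
(* pairing  cor a b = <b, a^v>  (cor a is the linear form a^v on X).            *)
Definition irr_root_system (k : fieldType) (X : vectType k) (D : seq X)
    (cor : X -> X -> k) :=
  [/\ 0 \in D,
      (<<nzroots D>>%VS = fullv),
      (forall a, a \in nzroots D ->
         [/\ (forall (c : k) (x y : X), cor a (c *: x + y) = c * cor a x + cor a y),
             cor a a = 2%:R,
             (forall b, b \in nzroots D -> b - cor a b *: a \in nzroots D) &
             (forall b, b \in nzroots D -> exists z : int, cor a b = z%:~R)]),
      nzroots D != [::] &
      ~ (exists P : pred X,
           [/\ (exists2 a, a \in nzroots D & P a),
               (exists2 b, b \in nzroots D & ~~ P b) &
               (forall a b, a \in nzroots D -> b \in nzroots D -> P a -> ~~ P b ->
                  cor a b = 0)])].

(* G a l is the homogeneous component L_a^l (as a predicate on L).              *)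
Definition is_subspace (k : fieldType) (L : lmodType k) (S : L -> Prop) :=
  S 0 /\ (forall (c : k) x y, S x -> S y -> S (c *: x + y)).

Definition is_direct_sum_grading (k : fieldType) (L : lmodType k)
    (I J : eqType) (G : I -> J -> L -> Prop) :=
  [/\ (forall i j, is_subspace (G i j)),
      (forall x : L, exists s : seq ((I * J) * L),
         [/\ uniq (map fst s), (forall p, p \in s -> G p.1.1 p.1.2 p.2) &
             x = \sum_(p <- s) p.2]) &
      (forall s : seq ((I * J) * L),
         uniq (map fst s) -> (forall p, p \in s -> G p.1.1 p.1.2 p.2) ->
         \sum_(p <- s) p.2 = 0 -> forall p, p \in s -> p.2 = 0)].

Definition rootspace (k : fieldType) (L : lmodType k) (I J : eqType)
    (G : I -> J -> L -> Prop) (a : I) (x : L) :=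
  exists s : seq (J * L), (forall p, p \in s -> G a p.1 p.2) /\ x = \sum_(p <- s) p.2.

Definition degspace (k : fieldType) (L : lmodType k) (I J : eqType)
    (G : I -> J -> L -> Prop) (l : J) (x : L) :=
  exists s : seq (I * L), (forall p, p \in s -> G p.1 l p.2) /\ x = \sum_(p <- s) p.2.

(* Lambda = Z^n (a finitely generated free abelian group).  The Q-grading is    *)
(* encoded by indexing over all of X (components outside Q are 0 by LT1).       *)
Record is_lie_torus (k : fieldType) (X : vectType k) (D : seq X)
    (cor : X -> X -> k) (n : nat) (L : lmodType k) (br : L -> L -> L)
    (G : X -> 'rV[int]_n -> L -> Prop) : Prop := {
  lt_lie : is_lie_bracket br;
  lt_grading : is_direct_sum_grading G;
  lt_bracket : forall a b l m x y, G a l x -> G b m y -> G (a + b) (l + m) (br x y);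
  lt1 : forall a : X, (exists x, rootspace G a x /\ x <> 0) <-> a \in D;
  lt2i : forall a, a \in indroots D -> exists x, G a 0 x /\ x <> 0;
  lt2ii : forall a l, a \in nzroots D -> (exists x, G a l x /\ x <> 0) ->
         exists e f,
           [/\ G a l e, G (- a) (- l) f,
               (forall z, G a l z <-> exists c : k, z = c *: e),
               (forall z, G (- a) (- l) z <-> exists c : k, z = c *: f) &
               (forall b x, rootspace G b x -> br (br e f) x = cor a b *: x)];
  lt3 : forall S : L -> Prop, is_subspace S ->
         (forall x y, S x -> S y -> S (br x y)) ->
         (forall a x, a \in nzroots D -> rootspace G a x -> S x) ->
         forall x, S x;
  lt4 : forall H : 'rV[int]_n -> Prop,
         H 0 -> (forall l m, H l -> H m -> H (l - m)) ->
         (forall l, (exists x, degspace G l x /\ x <> 0) -> H l) ->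
         forall l, H l }.

(* Main.v *)
Require Import Defs.
From HB Require Import structures.
From mathcomp Require Import all_boot all_order all_algebra.
From mathcomp Require Import ring.
Import Order.TTheory GRing.Theory Num.Theory.
Set Implicit Arguments. Unset Strict Implicit. Unset Printing Implicit Defensive.
Local Open Scope ring_scope.

Definition lpos (n : nat) (w : 'rV[int]_n) : bool :=
  [exists i : 'I_n, [forall j : 'I_n, (j < i)%N ==> (w ord0 j == 0)] && (0 < w ord0 i)].

Lemma lpos_add n (u v : 'rV[int]_n) : lpos u -> lpos v -> lpos (u + v).
Proof.
move=> /existsP [i /andP [/forallP Hi hi]] /existsP [j /andP [/forallP Hj hj]].
apply/existsP; case: (ltngtP i j) => [ij|ji|ij].
- exists i; apply/andP; split.
    apply/forallP => t; apply/implyP => ti.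
    by rewrite !mxE (eqP (implyP (Hi t) ti)) (eqP (implyP (Hj t) (ltn_trans ti ij))) addr0.
  by rewrite !mxE (eqP (implyP (Hj i) ij)) addr0.
- exists j; apply/andP; split.
    apply/forallP => t; apply/implyP => tj.
    by rewrite !mxE (eqP (implyP (Hj t) tj)) (eqP (implyP (Hi t) (ltn_trans tj ji))) addr0.
  by rewrite !mxE (eqP (implyP (Hi j) ji)) add0r.
- have ij' : i = j by apply: val_inj.
  subst j; exists i; apply/andP; split.
    apply/forallP => t; apply/implyP => ti.
    by rewrite !mxE (eqP (implyP (Hi t) ti)) (eqP (implyP (Hj t) ti)) addr0.
  by rewrite !mxE addr_gt0.
Qed.

Lemma lpos0 n : ~~ lpos (0 : 'rV[int]_n).
Proof.
apply/negP => /existsP [i /andP [_]]; by rewrite mxE ltxx.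
Qed.

Lemma lpos_tri n (w : 'rV[int]_n) : w != 0 -> lpos w || lpos (- w).
Proof.
move=> wn0.
have [j0 hj0] : exists j, w ord0 j != 0.
  apply/existsP; apply: contraR wn0 => /existsPn H; apply/eqP/matrixP => i j.
  by rewrite (ord1 i) mxE; apply/eqP; move: (H j); rewrite negbK.
case: (@arg_minnP _ j0 (fun j => w ord0 j != 0) (fun j : 'I_n => (j : nat)) hj0) => i hi imin.
have Hlow : [forall j : 'I_n, (j < i)%N ==> (w ord0 j == 0)].
  apply/forallP => t; apply/implyP => ti; apply: contraLR ti => /imin.
  by rewrite -leqNgt.
case: (ltgtP 0 (w ord0 i)) => h.
- by apply/orP; left; apply/existsP; exists i; rewrite Hlow h.
- apply/orP; right; apply/existsP; exists i; apply/andP; split.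
    apply/forallP => t; apply/implyP => ti.
    by rewrite mxE oppr_eq0 (eqP (implyP (forallP Hlow t) ti)).
  by rewrite mxE oppr_gt0.
- by move: hi; rewrite -h eqxx.
Qed.

Definition llt n (u v : 'rV[int]_n) := lpos (v - u).

Lemma llt_irr n (u : 'rV[int]_n) : ~~ llt u u.
Proof. by rewrite /llt subrr lpos0. Qed.

Lemma llt_trans n (u v w : 'rV[int]_n) : llt u v -> llt v w -> llt u w.
Proof.
rewrite /llt => h1 h2; have := lpos_add h2 h1.
by rewrite addrA subrK.
Qed.

Lemma llt_total n (u v : 'rV[int]_n) : u != v -> llt u v || llt v u.
Proof.
move=> uv; have : v - u != 0 by rewrite subr_eq0 eq_sym.
by move/lpos_tri; rewrite /llt opprB.
Qed.

Lemma llt_add n (u v u' v' : 'rV[int]_n) : llt u v -> llt u' v' -> llt (u + u') (v + v').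
Proof.
rewrite /llt => h1 h2; have := lpos_add h1 h2.
by rewrite opprD addrACA.
Qed.

Lemma llt_addr n (u v w : 'rV[int]_n) : llt u v -> llt (u + w) (v + w).
Proof. by rewrite /llt opprD addrACA subrr addr0. Qed.

Lemma llt_addl n (u v w : 'rV[int]_n) : llt u v -> llt (w + u) (w + v).
Proof. by rewrite ![w + _]addrC; apply: llt_addr. Qed.

Lemma br_addl (k : fieldType) (L : lmodType k) (br : L -> L -> L) :
  is_lie_bracket br -> forall u v z, br (u + v) z = br u z + br v z.
Proof. by rewrite /is_lie_bracket; case=> h1 _ _ _ u v z; rewrite -[u]scale1r h1 !scale1r. Qed.

Lemma br_addr (k : fieldType) (L : lmodType k) (br : L -> L -> L) :
  is_lie_bracket br -> forall u v z, br z (u + v) = br z u + br z v.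
Proof. by rewrite /is_lie_bracket; case=> _ h1 _ _ u v z; rewrite -[u]scale1r h1 !scale1r. Qed.

Lemma br_0l (k : fieldType) (L : lmodType k) (br : L -> L -> L) :
  is_lie_bracket br -> forall z, br 0 z = 0.
Proof.
move=> hb z; have h := br_addl hb 0 0 z; rewrite addr0 -{1}[br 0 z]addr0 in h.
by move/addrI: h.
Qed.

Lemma br_0r (k : fieldType) (L : lmodType k) (br : L -> L -> L) :
  is_lie_bracket br -> forall z, br z 0 = 0.
Proof.
move=> hb z; have h := br_addr hb 0 0 z; rewrite addr0 -{1}[br z 0]addr0 in h.
by move/addrI: h.
Qed.

Lemma br_scalel (k : fieldType) (L : lmodType k) (br : L -> L -> L) :
  is_lie_bracket br -> forall c u z, br (c *: u) z = c *: br u z.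
Proof. by move=> hb c u z; have := (let: And4 h _ _ _ := hb in h) c u 0 z; rewrite addr0 (br_0l hb) addr0. Qed.

Lemma br_scaler (k : fieldType) (L : lmodType k) (br : L -> L -> L) :
  is_lie_bracket br -> forall c u z, br z (c *: u) = c *: br z u.
Proof. by move=> hb c u z; have := (let: And4 _ h _ _ := hb in h) c u 0 z; rewrite addr0 (br_0r hb) addr0. Qed.

Lemma br_anti (k : fieldType) (L : lmodType k) (br : L -> L -> L) :
  is_lie_bracket br -> forall u v, br u v = - br v u.
Proof.
move=> hb u v.
have hz : forall w, br w w = 0 by move=> w; case: hb => _ _ h _; apply: h.
have h := hz (u + v).
rewrite (br_addl hb) in h.
rewrite !(br_addr hb) in h.
rewrite !hz in h.
rewrite add0r addr0 in h.
by apply/eqP; rewrite -addr_eq0; apply/eqP.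
Qed.

Lemma br_comm (k : fieldType) (L : lmodType k) (br : L -> L -> L) :
  is_lie_bracket br -> forall e f z, br e (br f z) = br f (br e z) + br (br e f) z.
Proof.
move=> hb e f z; have h : br e (br f z) + br f (br z e) + br z (br e f) = 0 by case: hb.
rewrite (br_anti hb z e) (br_anti hb z (br e f)) -(scaleN1r (br e z)) (br_scaler hb) scaleN1r in h.
by apply/eqP; rewrite -subr_eq0 opprD addrA; apply/eqP.
Qed.

Lemma br_suml (k : fieldType) (L : lmodType k) (br : L -> L -> L) (T : Type) :
  is_lie_bracket br -> forall (s : seq T) (F : T -> L) z,
  br (\sum_(p <- s) F p) z = \sum_(p <- s) br (F p) z.
Proof.
move=> hb; elim=> [|x s IH] F z; first by rewrite !big_nil br_0l.
by rewrite !big_cons (br_addl hb) IH.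
Qed.

Lemma br_sumr (k : fieldType) (L : lmodType k) (br : L -> L -> L) (T : Type) :
  is_lie_bracket br -> forall (s : seq T) (F : T -> L) z,
  br z (\sum_(p <- s) F p) = \sum_(p <- s) br z (F p).
Proof.
move=> hb; elim=> [|x s IH] F z; first by rewrite !big_nil br_0r.
by rewrite !big_cons (br_addr hb) IH.
Qed.

Lemma merge_pieces (k : fieldType) (L : lmodType k) (K : eqType) (P : K -> L -> Prop) :
  (forall i, P i 0) -> (forall i u v, P i u -> P i v -> P i (u + v)) ->
  forall s : seq (K * L), (forall p, p \in s -> P p.1 p.2) ->
  exists s' : seq (K * L), [/\ uniq (map fst s'),
     (forall p, p \in s' -> P p.1 p.2 /\ p.1 \in map fst s) &
     \sum_(p <- s') p.2 = \sum_(p <- s) p.2].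
Proof.
move=> P0 PD s Ps.
exists [seq (i, \sum_(p <- s | p.1 == i) p.2) | i <- undup (map fst s)]; split.
- have -> : forall r, map fst [seq (i, \sum_(p <- s | p.1 == i) p.2) | i <- r] = r.
    by elim=> //= i r ->.
  exact: undup_uniq.
- move=> p /mapP [i hi ->] /=; rewrite mem_undup in hi; split=> //.
  rewrite big_seq_cond; apply: (big_ind (P i)) => //; first exact: PD.
  by move=> q /andP [hq /eqP <-]; apply: Ps.
- rewrite big_map.
  under eq_bigr do rewrite big_mkcond.
  rewrite exchange_big /=; apply: eq_big_seq => p hp.
  rewrite -big_mkcond /= -big_filter.
  have -> : [seq i <- undup [seq i.1 | i <- s] | p.1 == i] = [:: p.1].
    rewrite (eq_filter (a2 := pred1 p.1)); last by move=> i /=; rewrite eq_sym.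
    apply: filter_pred1_uniq; first exact: undup_uniq.
    rewrite mem_undup; apply/mapP; exists p => //.
  by rewrite big_seq1.
Qed.

Lemma natf_inj (k : fieldType) (hk : [pchar k] =i pred0) (a b : nat) :
  (a%:R : k) = b%:R -> a = b.
Proof.
have h0 := (iffLR (pcharf0P k)) hk.
wlog ab : a b / (a <= b)%N.
  move=> H; case: (leqP a b) => [|/ltnW] h e; first exact: H.
  by apply/esym/H.
move=> e; rewrite -(subnKC ab) natrD -{1}[a%:R]addr0 in e.
move/addrI/esym/eqP: e; rewrite h0 => /eqP d0.
by rewrite -(subnKC ab) d0 addn0.
Qed.

Lemma sum_closed (k : fieldType) (M : nat) (i : nat) :
  \sum_(t < i.+1) (- (M%:R : k) + t%:R * 2) = (i.+1 * i)%:R - (i.+1 * M)%:R.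
Proof.
elim: i => [|i IH]; first by rewrite big_ord1 /= !mul1n; ring.
rewrite big_ord_recr /= IH.
rewrite !natrM ?natrD; ring.
Qed.

Lemma sl2 (k : fieldType) (hk : [pchar k] =i pred0) (L : lmodType k)
  (br : L -> L -> L) (hb : is_lie_bracket br) (W : k -> L -> Prop) (e f : L)
  (WE : forall nu w, W nu w -> W (nu + 2) (br e w))
  (WF : forall nu w, W nu w -> W (nu - 2) (br f w))
  (WH : forall nu w, W nu w -> br (br e f) w = nu *: w)
  (Fnil : forall nu w, W nu w -> exists N, iter N (br f) w = 0) :
  forall (m : nat) v, W (- m%:R) v -> v <> 0 -> iter m (br e) v <> 0.
Proof.
have iterE0 : forall i, iter i (br e) 0 = 0.
  by elim=> //= i ->; rewrite br_0r.
have WiterE : forall i nu w, W nu w -> W (nu + i%:R * 2) (iter i (br e) w).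
  elim=> [|i IH] nu w hw /=; first by rewrite mul0r addr0.
  have -> : nu + i.+1%:R * 2 = nu + i%:R * 2 + 2 by rewrite -addn1 natrD; ring.
  exact/WE/IH.
have WiterF : forall i nu w, W nu w -> W (nu - i%:R * 2) (iter i (br f) w).
  elim=> [|i IH] nu w hw /=; first by rewrite mul0r subr0.
  have -> : nu - i.+1%:R * 2 = nu - i%:R * 2 - 2 by rewrite -addn1 natrD; ring.
  exact/WF/IH.
have K1 : forall nu w, W nu w -> forall K,
    iter K.+1 (br e) (br f w) = br f (iter K.+1 (br e) w)
       + (\sum_(t < K.+1) (nu + t%:R * 2)) *: iter K (br e) w.
  move=> nu w hw; elim=> [|K IH].
    by rewrite /= (br_comm hb) (WH _ _ hw) big_ord1 /= mul0r addr0.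
  rewrite iterS IH (br_addr hb) (br_scaler hb) (br_comm hb) (WH _ _ (@WiterE K.+1 _ _ hw)).
  rewrite -!iterS [in RHS]big_ord_recr /= -addrA -scalerDl.
  by congr (_ + _ *: _); rewrite addrC.
move=> m v hv v0 hEm.
have [N hN] := Fnil _ _ hv.
have [p [hp0 hp1]] : exists p, iter p (br f) v <> 0 /\ iter p.+1 (br f) v = 0.
  elim: N hN => [|N IH] hN; first by [].
  case: (eqVneq (iter N (br f) v) 0) => [h|h]; first exact: IH h.
  by exists N; split => //; apply/eqP.
have hA : forall q, iter (m + q) (br e) (iter q (br f) v) = 0.
  elim=> [|q IH]; first by rewrite addn0.
  rewrite addnS [iter q.+1 _ _]iterS (@K1 _ _ (@WiterF q _ _ hv)) iterS IH !(br_0r hb).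
  by rewrite scaler0 addr0.
set u := iter p (br f) v in hp0 hA.
have hu := @WiterF p _ _ hv; rewrite -/u in hu.
have hFu : br f u = 0 by rewrite -hp1 iterS.
have hB : forall i, (i <= m + p)%N -> iter i (br e) u <> 0.
  elim=> [|i IH] hi; first by [].
  move=> h0; have := @K1 _ _ hu i.
  rewrite hFu iterE0 h0 (br_0r hb) add0r => /esym /eqP.
  rewrite scaler_eq0 => /orP [|/eqP]; last by apply: IH; apply: ltnW.
  have -> : - (m%:R : k) - p%:R * 2 = - (m + p * 2)%:R by rewrite natrD natrM; ring.
  rewrite sum_closed subr_eq0 => /eqP /(natf_inj hk) /eqP.
  rewrite eqn_pmul2l // => /eqP ei.
  by move: hi; rewrite ei ltnNge leq_add2l leq_pmulr.
exact: (hB (m + p) (leqnn _) (hA p)).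
Qed.

Definition pieces (k : fieldType) (X : eqType) (n : nat) (L : lmodType k)
  (G : X -> 'rV[int]_n -> L -> Prop) (P : 'rV[int]_n -> Prop) (z : L) :=
  exists s : seq ((X * 'rV[int]_n) * L),
    (forall p, p \in s -> G p.1.1 p.1.2 p.2 /\ P p.1.2) /\ z = \sum_(p <- s) p.2.

Lemma pieces_add (k : fieldType) (X : eqType) (n : nat) (L : lmodType k)
  (G : X -> 'rV[int]_n -> L -> Prop) (P : 'rV[int]_n -> Prop) z1 z2 :
  pieces G P z1 -> pieces G P z2 -> pieces G P (z1 + z2).
Proof.
move=> [s1 [h1 ->]] [s2 [h2 ->]]; exists (s1 ++ s2); split; last by rewrite big_cat.
by move=> p; rewrite mem_cat => /orP [/h1|/h2].
Qed.

Lemma pieces_mono (k : fieldType) (X : eqType) (n : nat) (L : lmodType k)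
  (G : X -> 'rV[int]_n -> L -> Prop) (P Q : 'rV[int]_n -> Prop) z :
  (forall l, P l -> Q l) -> pieces G P z -> pieces G Q z.
Proof.
move=> PQ [s [h ->]]; exists s; split=> // p /h [? ?]; split=> //; exact: PQ.
Qed.

Lemma pieces1 (k : fieldType) (X : eqType) (n : nat) (L : lmodType k)
  (G : X -> 'rV[int]_n -> L -> Prop) (P : 'rV[int]_n -> Prop) g l z :
  G g l z -> P l -> pieces G P z.
Proof.
move=> hG hP; exists [:: ((g, l), z)]; split; last by rewrite big_seq1.
by move=> p; rewrite inE => /eqP ->.
Qed.

Lemma pieces_br (k : fieldType) (X : vectType k) (n : nat) (L : lmodType k)
  (br : L -> L -> L) (hb : is_lie_bracket br)
  (G : X -> 'rV[int]_n -> L -> Prop)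
  (hG : forall a b l m x y, G a l x -> G b m y -> G (a + b) (l + m) (br x y))
  (P Q R : 'rV[int]_n -> Prop) z1 z2 :
  (forall l l', P l -> Q l' -> R (l + l')) ->
  pieces G P z1 -> pieces G Q z2 -> pieces G R (br z1 z2).
Proof.
move=> PQR [s1 [h1 ->]] [s2 [h2 ->]].
exists [seq ((p.1.1 + q.1.1, p.1.2 + q.1.2), br p.2 q.2) | p <- s1, q <- s2]; split.
  move=> r /allpairsP [[p q] /= [hp hq ->]] /=.
  have [Gp Pp] := h1 _ hp; have [Gq Qq] := h2 _ hq.
  by split; [apply: hG | apply: PQR].
rewrite big_allpairs_dep /= (br_suml hb); apply: eq_bigr => p _.
by rewrite br_sumr.
Qed.

Lemma uniq_map_inj (T1 T2 : eqType) (f : T1 -> T2) (s : seq T1) :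
  uniq (map f s) -> forall x y, x \in s -> y \in s -> f x = f y -> x = y.
Proof.
elim: s => // h t IH /= /andP [nh ut] x y; rewrite !inE.
case/orP=> [/eqP ->|xt]; case/orP=> [/eqP ->|yt] //.
- by move=> e; move: nh; rewrite e map_f.
- by move=> e; move: nh; rewrite -e map_f.
- exact: IH.
Qed.

Lemma maxel (n : nat) (T : eqType) (s : seq ('rV[int]_n * T)) :
  s != [::] -> exists2 q, q \in s & forall q', q' \in s -> q'.1 = q.1 \/ llt q'.1 q.1.
Proof.
elim: s => // h t IH _.
case: (eqVneq t [::]) => [->|tn].
  by exists h; rewrite ?inE // => q'; rewrite inE => /eqP ->; left.
have [q qt qmax] := IH tn.
case: (boolP ((h.1 == q.1) || llt h.1 q.1)) => [hq|].
  exists q; first by rewrite inE qt orbT.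
  move=> q'; rewrite inE => /orP [/eqP ->|/qmax //].
  by case/orP: hq => [/eqP ->|]; [left|right].
rewrite negb_or => /andP [hq1 hq2].
have hq : llt q.1 h.1 by move: (llt_total hq1); rewrite (negbTE hq2).
exists h; first by rewrite inE eqxx.
move=> q'; rewrite inE => /orP [/eqP ->|/qmax [->|]]; [by left|by right|].
by move=> h'; right; apply: llt_trans h' hq.
Qed.

Lemma leading (k : fieldType) (X : vectType k) (n : nat) (L : lmodType k)
  (G : X -> 'rV[int]_n -> L -> Prop)
  (hsub : forall g l, is_subspace (G g l)) (g : X) (z : L) :
  rootspace G g z -> z <> 0 ->
  exists l0 z0 zr, [/\ G g l0 z0, z0 <> 0, pieces G (fun l => llt l l0) zr & z = z0 + zr].
Proof.
move=> [s [hs ->]] z0.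
have GD : forall l u v, G g l u -> G g l v -> G g l (u + v).
  by move=> l u v hu hv; have [_ h] := hsub g l; rewrite -[u]scale1r; apply: h.
have [s' [us' hs' es']] := merge_pieces (fun l => let: conj h _ := hsub g l in h) GD hs.
set s'' := [seq q <- s' | q.2 != 0].
have es'' : \sum_(q <- s'') q.2 = \sum_(q <- s') q.2.
  rewrite big_filter big_mkcond /=; apply: eq_bigr => q _.
  by case: eqP => [->|].
have us'' : uniq (map fst s'').
  apply: (subseq_uniq _ us'); apply: map_subseq; exact: filter_subseq.
have ns'' : s'' != [::].
  by apply/eqP => e; apply: z0; rewrite -es' -es'' e big_nil.
have [q0 q0in q0max] := maxel ns''.
have q0s' : q0 \in s' by move: q0in; rewrite mem_filter => /andP [].
have q0n : q0.2 != 0 by move: q0in; rewrite mem_filter => /andP [].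
exists q0.1, q0.2, (\sum_(q <- s'' | q != q0) q.2); split.
- by have [] := hs' _ q0s'.
- exact/eqP.
- exists [seq ((g, q.1), q.2) | q <- s'' & q != q0]; split; last first.
    by rewrite big_map big_filter.
  move=> p /mapP [q]; rewrite mem_filter => /andP [qq0 qin] -> /=.
  have qs' : q \in s' by move: qin; rewrite mem_filter => /andP [].
  split; first by have [] := hs' _ qs'.
  case: (q0max _ qin) => // e.
  by move: qq0; rewrite (uniq_map_inj us'' qin q0in e) eqxx.
- by rewrite -es' -es'' (bigD1_seq q0) //; apply: map_uniq us''.
Qed.

Unset Implicit Arguments.

Lemma e1 (V : zmodType) (u v : V) j : - u + (v - u *+ j) = v - u *+ j.+1.
Proof. by rewrite mulrS opprD addrCA. Qed.

Theorem lemma3p5 (k : fieldType) (hk : [pchar k] =i pred0)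
  (X : vectType k) (D : seq X) (cor : X -> X -> k)
  (hD : irr_root_system D cor)
  (n : nat) (L : lmodType k) (br : L -> L -> L)
  (G : X -> 'rV[int]_n -> L -> Prop)
  (hL : is_lie_torus D cor br G)
  (a b : X) (ha : a \in nzroots D) (hb : b \in nzroots D)
  (m : nat) (hm : (0 < m)%N) (hab : cor a b = - m%:R)
  (x y : L) (hx : rootspace G a x) (hx0 : x <> 0) (hy : rootspace G b y) (hy0 : y <> 0) :
  iter m (br x) y <> 0.
Proof.
case: hL => hlie hgrad hbrk hlt1 _ hlt2ii _ _.
case: hgrad => hsub _ huniq.
have [l0 [x0 [xr [Gx0 x00 Pxr ex]]]] := leading hsub hx hx0.
have [m0 [y0 [yr [Gy0 y00 Pyr ey]]]] := leading hsub hy hy0.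
set d := fun i => m0 + l0 *+ i.
have hT : forall i, exists g, G g (d i) (iter i (br x0) y0) /\
    exists r, pieces G (fun l => llt l (d i)) r /\ iter i (br x) y = iter i (br x0) y0 + r.
  elim=> [|i [g [Gt [r [Pr er]]]]].
    exists b; split; first by rewrite /d mulr0n addr0.
    by exists yr; split; [rewrite /d mulr0n addr0 | ].
  have dS : d i.+1 = l0 + d i by rewrite /d mulrS addrCA.
  exists (a + g); split; first by rewrite dS /=; apply: hbrk.
  exists (br x0 r + br xr (iter i (br x0) y0 + r)); split.
    apply: pieces_add.
      apply: (pieces_br hlie hbrk (P := fun l => l = l0) (Q := fun l => llt l (d i))) => //.
        by move=> l l' -> h; rewrite dS; apply: llt_addl.
      exact: (pieces1 Gx0).
    apply: (pieces_br hlie hbrk (P := fun l => llt l l0) (Q := fun l => l = d i \/ llt l (d i))) => //.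
      by move=> l l' h1 [->|h2]; rewrite dS; [exact: llt_addr | exact: llt_add].
    apply: pieces_add; first by apply: (pieces1 Gt); left.
    by apply: (pieces_mono _ Pr) => l h; right.
  by rewrite !iterS er ex (br_addl hlie) (br_addr hlie) addrA.
have [g [Gt [r [[s [hs rs]] er]]]] := hT m.
move=> H0; rewrite er in H0.
have P0 : forall i : X * 'rV[int]_n, G i.1 i.2 0 by move=> i; case: (hsub i.1 i.2).
have PD : forall (i : X * 'rV[int]_n) u v, G i.1 i.2 u -> G i.1 i.2 v -> G i.1 i.2 (u + v).
  by move=> i u v hu hv; have [_ h] := hsub i.1 i.2; rewrite -[u]scale1r; apply: h.
have [s' [us' hs' es']] := @merge_pieces _ _ _ (fun kk z => G kk.1 kk.2 z) P0 PD s
   (fun p hp => (hs p hp).1).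
have t0 : iter m (br x0) y0 = 0.
  apply: (huniq (((g, d m), iter m (br x0) y0) :: s') _ _ _ ((g, d m), iter m (br x0) y0)).
  - rewrite /= us' andbT; apply/mapP => [[p ps' e]].
    have [_ /mapP [p' p's e']] := hs' p ps'.
    have [_ hl] := hs p' p's.
    by move: hl; rewrite -e' -e /= => hl; move: (llt_irr (d m)); rewrite hl.
  - move=> p; rewrite inE => /orP [/eqP -> //|/hs' []] //.
  - by rewrite big_cons es' -rs.
  - exact: mem_head.
case: hD => _ _ hcor _ _.
have [clin caa _ _] := hcor a ha.
have [e [f [He Hf hGe hGf hH]]] := hlt2ii a l0 ha (ex_intro _ x0 (conj Gx0 x00)).
have [c xc] := (hGe x0).1 Gx0.
have c0 : c != 0 by apply/eqP => c0; apply: x00; rewrite xc c0 scale0r.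
have iterc : forall i w, iter i (br (c *: e)) w = c ^+ i *: iter i (br e) w.
  elim=> [|i IH] w /=; first by rewrite expr0 scale1r.
  by rewrite IH (br_scalel hlie) (br_scaler hlie) scalerA exprS.
move: t0; rewrite xc iterc => /eqP; rewrite scaler_eq0 expf_eq0 (negbTE c0) andbF /= => /eqP.
pose W := fun nu w => exists g l, G g l w /\ cor a g = nu.
have WE : forall nu w, W nu w -> W (nu + 2) (br e w).
  move=> nu w [g' [l [Gw <-]]]; exists (a + g'), (l0 + l); split; first exact: hbrk He Gw.
  by rewrite -[X in cor a (X + g')]scale1r clin caa mul1r addrC.
have WF : forall nu w, W nu w -> W (nu - 2) (br f w).
  move=> nu w [g' [l [Gw <-]]]; exists (- a + g'), (- l0 + l); split; first exact: hbrk Hf Gw.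
  by rewrite -scaleN1r clin caa mulN1r addrC.
have WH : forall nu w, W nu w -> br (br e f) w = nu *: w.
  move=> nu w [g' [l [Gw <-]]]; apply: hH; exists [:: (l, w)]; split.
    by move=> p; rewrite inE => /eqP ->.
  by rewrite big_seq1.
have an0 : a != 0 by move: ha; rewrite mem_filter => /andP [].
have Fnil : forall nu w, W nu w -> exists N, iter N (br f) w = 0.
  move=> nu w [g' [l [Gw _]]].
  have Gi : forall i, G (g' - a *+ i) (l - l0 *+ i) (iter i (br f) w).
    elim=> [|i IH] /=; first by rewrite !mulr0n !subr0.
    by have := hbrk _ _ _ _ _ _ Hf IH; rewrite !e1.
  case: (boolP (has (fun i => iter i (br f) w == 0) (iota 0 (size D).+1))) => [/hasP [i _ /eqP hi]|hn].
    by exists i.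
  exfalso.
  have sub : {subset [seq g' - a *+ i | i <- iota 0 (size D).+1] <= D}.
    move=> z /mapP [i iin ->]; apply/hlt1; exists (iter i (br f) w); split.
      exists [:: (l - l0 *+ i, iter i (br f) w)]; split; last by rewrite big_seq1.
      by move=> p; rewrite inE => /eqP ->; exact: Gi.
    by move=> h; move/hasPn: hn => /(_ i iin); rewrite h eqxx.
  have un : uniq [seq g' - a *+ i | i <- iota 0 (size D).+1].
    rewrite map_inj_uniq ?iota_uniq // => i j /addrI /oppr_inj /eqP.
    rewrite -!scaler_nat -subr_eq0 -scalerBl scaler_eq0 (negbTE an0) orbF subr_eq0.
    by move/eqP/(natf_inj hk).
  by have := uniq_leq_size un sub; rewrite size_map size_iota ltnn.
have Wy0 : W (- m%:R) y0 by exists b, m0; split.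
exact: (@sl2 k hk L br hlie W e f WE WF WH Fnil m y0 Wy0 y00).
Qed.
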